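(* Let $c=56^2$ and $c'=27$. Let $0<\epsilon\le\Delta\le1$, let $n\ge2$, and let $\tilde p$ be a probability distribution on $\{1,\dots,n\}$. Let $S=c(\Delta/\epsilon)^2\log n$ and let $\beta\le1$ satisfy $1-\beta\ge8\Delta$. Assume $\{1,\dots,n\}$ is partitioned into sets $H$ and $L$ with $\sum_{i\in L}\tilde p_i=1-\beta$, $\sum_{i\in H}\tilde p_i=\beta$, and $\sum_{i\in L}\tilde p_i^2\le (1-\beta)^2/S$. Let $v_1,\dots,v_{k_1}\in[-1,1]^n$ with $k_1=n^2$, and let $p_1,\dots,p_{k_2}$ be probability distributions on $\{1,\dots,n\}$ with $k_2\le n^{c'(\Delta/\epsilon)^2}$. Then there exists a probability distribution $\tilde p'$ on $\{1,\dots,n\}$ with $\mathrm{supp}(\tilde p')\subseteq\mathrm{supp}(\tilde p)$ such that: (1) $d(\tilde p,\tilde p')=3\Delta$; (2) $\tilde p'\cdot v_i\le\tilde p\cdot v_i+\epsilon$ for all $i\in\{1,\dots,k_1\}$; (3) $d(\tilde p',p_i)>d(\tilde p,p_i)-\Delta$ for all $i\in\{1,\dots,k_2\}$.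
   Context: $\mathrm{supp}(p)=\{i:p_i>0\}$. For distributions $p,p'$, $d(p,p')=\frac12\sum_i|p_i-p'_i|$ (variation distance). $\log$ is the natural logarithm. *)

(* Defs.v *)
From mathcomp Require Import all_boot all_order all_algebra.
From mathcomp Require Import reals exp.
Set Implicit Arguments. Unset Strict Implicit. Unset Printing Implicit Defensive.
Import Order.TTheory GRing.Theory Num.Theory.
Local Open Scope ring_scope.

Definition is_distr (R : realType) (n : nat) (p : 'I_n -> R) : Prop :=
  (forall i, 0 <= p i) /\ \sum_(i < n) p i = 1.

Definition supp_sub (R : realType) (n : nat) (p q : 'I_n -> R) : Prop :=
  forall i, 0 < p i -> 0 < q i.

Definition vdist (R : realType) (n : nat) (p q : 'I_n -> R) : R :=
  2^-1 * \sum_(i < n) `|p i - q i|.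

Definition dotp (R : realType) (n : nat) (p v : 'I_n -> R) : R :=
  \sum_(i < n) p i * v i.

(* Main.v *)
Require Import Defs.
From mathcomp Require Import all_boot all_order all_algebra.
From mathcomp Require Import reals exp sequences.
From mathcomp Require Import ring lra.
Import Order.TTheory GRing.Theory Num.Theory.
Local Open Scope ring_scope.

Section C.
Variable R : realType.

Lemma cosh_small (y : R) : `|y| <= 4^-1 ->
  expR y + expR (- y) <= 2 * expR (16/15 * y ^+ 2).
Proof.
move=> hy.
have hy1 : -4^-1 <= y <= 4^-1 by rewrite -ler_norml.
case/andP: hy1 => h1 h2.
have ea : (1 - y) * expR y <= 1.
  have := expR_ge1Dx (- y) => h.
  have := ler_wpM2r (expR_ge0 y) h.
  by rewrite -expRD addNr expR0 -[1 + - y]/(1 - y).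
have eb : (1 + y) * expR (- y) <= 1.
  have := expR_ge1Dx y => h.
  have := ler_wpM2r (expR_ge0 (-y)) h.
  by rewrite -expRD addrN expR0.
have e3 := expR_ge1Dx (16/15 * y ^+ 2).
have pa := expR_gt0 y. have pb := expR_gt0 (-y).
set a := expR y in ea pa *. set b := expR (-y) in eb pb *.
suff : a + b <= 2 * (1 + 16 / 15 * y ^+ 2) by lra.
have p1 : 0 < 1 - y by lra.
have p2 : 0 < 1 + y by lra.
have ha : a <= (1 - y)^-1.
  rewrite -[a](mulKf (lt0r_neq0 p1)) -[X in _ <= X]mulr1; apply: ler_wpM2l => //; by rewrite invr_ge0 ltW.
have hb : b <= (1 + y)^-1.
  rewrite -[b](mulKf (lt0r_neq0 p2)) -[X in _ <= X]mulr1; apply: ler_wpM2l => //; by rewrite invr_ge0 ltW.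
suff : (1 - y)^-1 + (1 + y)^-1 <= 2 * (1 + 16 / 15 * y ^+ 2) by lra.
have -> : (1 - y)^-1 + (1 + y)^-1 = 2 / ((1 - y) * (1 + y)).
  field. by apply/andP; split; apply lt0r_neq0.
rewrite ler_pdivrMr ?mulr_gt0 //.
have : y ^+ 2 <= 16^-1.
  rewrite -real_normK ?num_real //.
  have := normr_ge0 y. nra.
nra.
Qed.

Lemma cosh_le (x : R) : expR x + expR (- x) <= 2 * expR (16/15 * x ^+ 2).
Proof.
suff H : forall k : nat, forall x : R, `|x| <= (2 ^+ k) / 4 ->
  expR x + expR (- x) <= 2 * expR (16/15 * x ^+ 2).
  have hb := archi_boundP (normr_ge0 (4 * x)).
  apply: (H (Num.bound (`|4 * x|))).
  set m := Num.bound _ in hb *.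
  have hm : (m%:R : R) <= 2 ^+ m.
    have := ltn_expl m (isT : (1 < 2)%N).
    move=> /ltnW; rewrite -(ler_nat R) natrX => h. exact: h.
  rewrite normrM (ger0_norm (_ : (0:R) <= 4)) // in hb.
  rewrite ler_pdivlMr //; lra.
elim=> [|k IH] y hy.
  apply: cosh_small; move: hy; rewrite expr0; lra.
set z := y / 2.
have hz : `|z| <= 2 ^+ k / 4.
  rewrite /z normrM (ger0_norm (_ : (0:R) <= 2^-1)) //.
  move: hy; rewrite exprS; lra.
  by rewrite invr_ge0.
have IHz := IH z hz.
have ey : y = 2 * z by rewrite /z; field.
rewrite ey.
have -> : expR (2 * z) + expR (- (2 * z)) =
    (expR z + expR (- z)) ^+ 2 - 2.
  rewrite -mulrN !expRM_natl.
  have h1 : expR z * expR (- z) = 1 by rewrite -expRD addrN expR0.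
  rewrite sqrrD -[_ *+ 2]/(expR z * expR (-z) *+ 2) h1; ring.
have -> : expR (16 / 15 * (2 * z) ^+ 2) = expR (16/15 * z ^+ 2) ^+ 4.
  rewrite -expRM_natl; congr expR; rewrite exprMn; ring.
have pe := expR_gt0 (16/15 * z ^+ 2).
have s0 : 0 <= expR z + expR (- z) by rewrite addr_ge0 ?expR_ge0.
set E := expR (16/15 * z ^+ 2) in pe IHz *.
set s := expR z + expR (- z) in s0 IHz *.
have h2 : s ^+ 2 <= 4 * E ^+ 2 by rewrite !expr2; nra.
have h3 : 0 <= (E ^+ 2 - 1) ^+ 2 by apply: sqr_ge0.
have -> : E ^+ 4 = E ^+ 2 * E ^+ 2 by rewrite -exprD.
nra.
Qed.

Definition sgb (b : bool) : R := if b then 1 else -1.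
Definition ind (b : bool) : R := if b then 1 else 0.

Lemma hoeff (n : nat) (a : 'I_n -> R) (B t : R) : 0 < B -> 0 <= t ->
  \sum_(i < n) a i ^+ 2 <= B ->
  \sum_(s : {ffun 'I_n -> bool}) ind (t <= \sum_(i < n) a i * sgb (s i))
    <= 2 ^+ n * expR (- (15/64) * t ^+ 2 / B).
Proof.
move=> B0 t0 hB.
set lam := 15 * t / (32 * B).
have lam0 : 0 <= lam by rewrite /lam divr_ge0 ?mulr_ge0 // ltW.
have step1 : forall s : {ffun 'I_n -> bool},
   ind (t <= \sum_(i < n) a i * sgb (s i)) <=
   expR (- (lam * t)) * \prod_(i < n) expR (lam * a i * sgb (s i)).
  move=> s; rewrite -expR_sum -expRD.
  rewrite /ind; case: ifP => h; last exact: expR_ge0.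
  apply: le_trans (expR_ge1Dx _); rewrite lerDl.
  under eq_bigr do rewrite -mulrA.
  rewrite -mulr_sumr -mulrN -mulrDr; apply: mulr_ge0 => //.
  by rewrite addrC subr_ge0.
apply: le_trans (ler_sum _ (fun s _ => step1 s)) _.
rewrite -mulr_sumr.
rewrite -(bigA_distr_bigA (fun i b => expR (lam * a i * sgb b))) /=.
have step2 : \prod_(i < n) \sum_(b : bool) expR (lam * a i * sgb b) <=
    \prod_(i < n) (2 * expR (16/15 * (lam * a i) ^+ 2)).
  apply: ler_prod => i _; apply/andP; split.
    by apply: sumr_ge0 => b _; apply: expR_ge0.
  rewrite big_bool /= /sgb mulr1 mulrN1; exact: cosh_le.
apply: le_trans (ler_wpM2l (expR_ge0 _) step2) _.
rewrite big_split /= prodr_const card_ord -expR_sum.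
have step3 : \sum_(i < n) 16/15 * (lam * a i) ^+ 2 <= 16/15 * lam ^+ 2 * B.
  under eq_bigr do rewrite exprMn mulrA.
  rewrite -mulr_sumr; apply: ler_wpM2l => //.
  have := mulr_ge0 lam0 lam0; rewrite -expr2; lra.
have e3 : expR (- (lam * t)) * expR (16/15 * lam ^+ 2 * B) = expR (- (15/64) * t ^+ 2 / B).
  rewrite -expRD; congr expR; rewrite /lam; field; exact: lt0r_neq0.
rewrite -e3 mulrCA; apply: ler_wpM2l; first by rewrite exprn_ge0.
apply: ler_wpM2l; first exact: expR_ge0.
by rewrite ler_expR.
Qed.
End C.
Arguments sgb {R}.
Arguments ind {R}.
Section Det.
Variables (R : realType) (n : nat) (x sg : 'I_n -> R) (M w D : R).
Hypothesis hsg : forall i, sg i = 1 \/ sg i = -1.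
Hypothesis hMw1 : 0 < M + w.
Hypothesis hMw2 : 0 < M - w.
Hypothesis hM : \sum_(i < n) x i = M.
Hypothesis hw : \sum_(i < n) x i * sg i = w.
Hypothesis hD : 0 < D.

Definition al := 3 * D / (M + w).
Definition ga := 3 * D / (M - w).
Definition cc i := al * (1 + sg i) - ga * (1 - sg i).

Lemma lin (g : 'I_n -> R) : \sum_(i < n) x i * cc i * g i =
  (al - ga) * \sum_(i < n) x i * g i + (al + ga) * \sum_(i < n) x i * g i * sg i.
Proof.
rewrite !mulr_sumr -big_split /=; apply: eq_bigr => i _; rewrite /cc; ring.
Qed.

Lemma sum_c : \sum_(i < n) x i * cc i = 0.
Proof.
have := lin (fun _ => 1); under eq_bigr do rewrite mulr1.
move=> ->; under eq_bigr do rewrite mulr1. under [X in _ + _ * X]eq_bigr do rewrite mulr1.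
rewrite hM hw /al /ga; field; apply/andP; split; exact: lt0r_neq0.
Qed.

Lemma abs_c i : `|cc i| = al * (1 + sg i) + ga * (1 - sg i).
Proof.
have a0 : 0 < al by rewrite /al divr_gt0 // mulr_gt0.
have g0 : 0 < ga by rewrite /ga divr_gt0 // mulr_gt0.
rewrite /cc; case: (hsg i) => ->.
  rewrite ger0_norm; lra.
rewrite ler0_norm; lra.
Qed.

Lemma sum_abs : \sum_(i < n) x i * `|cc i| = 6 * D.
Proof.
have -> : \sum_(i < n) x i * `|cc i| = (al + ga) * \sum_(i < n) x i + (al - ga) * \sum_(i < n) x i * sg i.
  rewrite !mulr_sumr -big_split /=; apply: eq_bigr => i _; rewrite abs_c; ring.
rewrite hM hw /al /ga; field; apply/andP; split; exact: lt0r_neq0.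
Qed.

Lemma c_ge i : - (6 * D / (M - w)) <= cc i.
Proof.
have a0 : 0 < al by rewrite /al divr_gt0 // mulr_gt0.
have g0 : 0 < ga by rewrite /ga divr_gt0 // mulr_gt0.
have -> : 6 * D / (M - w) = 2 * ga by rewrite /ga; field; exact: lt0r_neq0.
rewrite /cc; case: (hsg i) => ->; lra.
Qed.

Lemma dev i : 0 < M -> cc i - 6 * D / M * sg i = - (w / M) * cc i * sg i.
Proof.
move=> M0; rewrite /cc /al /ga; case: (hsg i) => ->; field;
  rewrite ?lt0r_neq0 //; apply/andP; split; rewrite lt0r_neq0 //.
Qed.

End Det.



Arguments hoeff {R n}.

Lemma le4 (R : realType) (a b c d : R) : 0 <= a -> 0 <= b -> 0 <= c -> 0 <= d ->
  [/\ a <= a + b + c + d, b <= a + b + c + d, c <= a + b + c + d & d <= a + b + c + d].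
Proof. move=> *; split; lra. Qed.

Lemma indF (R : realType) (b : bool) : (ind b : R) < 1 -> ~~ b.
Proof. by case: b; rewrite /ind ?ltxx. Qed.

Lemma le_bigD1 (R : realType) (m : nat) (f : 'I_m -> R) a :
  (forall i, 0 <= f i) -> f a <= \sum_(i < m) f i.
Proof. move=> h; rewrite (bigD1 a) //= lerDl; exact: sumr_ge0. Qed.

Section Arith.
Variable R : realType.
Implicit Types (eps D M l y z v d x del K P X Q : R).
Lemma A1 eps D M : 0 < eps -> eps <= D -> 0 < M -> eps * M / (13 * D) <= M / 13.
Proof.
move=> e0 eD M0; have D0 : 0 < D by lra.
rewrite ler_pdivrMr ?mulr_gt0 //.
have -> : M / 13 * (13 * D) = M * D by field.
nra.
Qed.
Lemma A2 P X Q : 0 <= X -> - X <= (`|P + X - Q| - `|P - X - Q|) / 2 <= X.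
Proof.
move=> X0; rewrite -ler_norml normrM.
have := ler_dist_dist (P + X - Q) (P - X - Q).
have -> : P + X - Q - (P - X - Q) = 2 * X by ring.
rewrite normrM (ger0_norm X0) (ger0_norm (_ : (0:R) <= 2)) //.
rewrite (ger0_norm (_ : (0:R) <= 2^-1)); last by rewrite invr_ge0.
lra.
Qed.
Lemma A3 l : 0 < l -> -(15/64*(3136/169)) * l <= -4 * l.
Proof. move=> *; lra. Qed.
Lemma A4 y : 0 < y -> - (15/64*(400/6084)*3136) * y <= -29 * y.
Proof. move=> *; lra. Qed.
Lemma A5 v : -1 <= v <= 1 -> v ^+ 2 <= 1.
Proof. case/andP=> *; rewrite expr2; nra. Qed.
Lemma A6 d x del : 0 <= x -> 0 <= del -> - (x * del) <= d <= x * del -> d ^+ 2 <= del ^+ 2 * x ^+ 2.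
Proof. move=> x0 d0 /andP[h1 h2]; rewrite !expr2; nra. Qed.
Lemma A7 D : 0 < D -> 0 <= 20 * D / 13.
Proof. move=> *; lra. Qed.
Lemma A8 y (m : R) : 0 < y -> y * m = 1 -> 2 <= m -> y <= 2^-1.
Proof. move=> *; nra. Qed.
Lemma A10 K l : l <= K * l -> 27 * K * l + -29 * K * l <= 2%:R * - l.
Proof. move=> *; lra. Qed.
Lemma A11 y z : 0 < y -> y <= 2^-1 -> z <= y ^+ 2 -> 2 * y ^+ 4 + y ^+ 2 + z < 1.
Proof.
move=> y0 y2 hz.
have hy2 : y ^+ 2 <= 4^-1 by rewrite expr2; nra.
have hy4 : y ^+ 4 <= 16^-1.
  have -> : y ^+ 4 = y ^+ 2 * y ^+ 2 by rewrite -exprD.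
  have h0 : 0 <= y ^+ 2 by apply: exprn_ge0; exact: ltW.
  nra.
lra.
Qed.
End Arith.

Arguments le4 {R}.
Arguments indF {R}.
Arguments le_bigD1 {R m}.
Section Arith2.
Variable R : realType.
Implicit Types (eps D M w sv U tau P Q X c sg del x : R).

Lemma B1 D M w tau : 0 < D -> 8 * D <= M -> `|w| < tau -> tau <= M / 13 ->
  [/\ 0 < M + w, 0 < M - w & 6 * D / (M - w) <= 1].
Proof.
move=> D0 hM hw ht.
have := ler_norml w tau; move: hw; rewrite ltr_norml => /andP[h1 h2] _.
have p2 : 0 < M - w by lra.
split; [lra | lra | ].
by rewrite ler_pdivrMr // mul1r; lra.
Qed.

Lemma B4 D eps M w sv U tau : 0 < D -> 0 < eps -> eps <= D -> 0 < M ->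
  tau = eps * M / (13 * D) -> `|w| < tau -> U < tau -> `|sv| <= M ->
  tau <= M / 13 ->
  (3 * D / (M + w) - 3 * D / (M - w)) * sv + (3 * D / (M + w) + 3 * D / (M - w)) * U <= eps.
Proof.
move=> D0 e0 eD M0 ht hw hU hs htM.
move: hw; rewrite ltr_norml => /andP[w1 w2].
move: hs; rewrite ler_norml => /andP[s1 s2].
have p1 : 0 < M + w by lra.
have p2 : 0 < M - w by lra.
have -> : (3 * D / (M + w) - 3 * D / (M - w)) * sv + (3 * D / (M + w) + 3 * D / (M - w)) * U
   = 6 * D * (M * U - w * sv) / ((M + w) * (M - w)).
  field; rewrite !lt0r_neq0 //.
rewrite ler_pdivrMr ?mulr_gt0 //.
have hDt : D * tau * 13 = eps * M by rewrite ht; field; rewrite lt0r_neq0.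
have t0 : 0 < tau by lra.
have hws : - (w * sv) <= tau * M.
  have : `|w * sv| <= tau * M.
    rewrite normrM; apply: ler_pM => //; [rewrite ltW // ?ltr_norml; lra|].
    by rewrite ler_norml; lra.
  rewrite ler_norml; lra.
have hMU : M * U <= M * tau by rewrite ler_pM2l // ltW.
have step : 6 * D * (M * U - w * sv) <= 12 * (D * tau) * M.
  have hh : M * U - w * sv <= 2 * tau * M by lra.
  have h6 : 0 <= 6 * D by lra.
  have h' := ler_wpM2l h6 hh.
  apply: le_trans h' _; rewrite le_eqVlt; apply/orP; left; apply/eqP; ring.
apply: le_trans step _.
have e12 : 12 * (D * tau) * M = 12 / 13 * eps * M * M.
  have hDt' : D * tau = eps * M / 13 by rewrite -hDt; field.
  by rewrite hDt'; field.
rewrite e12.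
have hw2 : w * w <= tau * tau by nra.
have htt : tau * tau <= M * M / 169.
  have h : tau * tau <= M / 13 * (M / 13) by apply: ler_pM; lra.
  have e169 : M / 13 * (M / 13) = M * M / 169 by field.
  by rewrite -e169.
have -> : (M + w) * (M - w) = M * M - w * w by ring.
set mm := M * M in htt *.
have hmm : 0 <= eps * mm by apply: mulr_ge0; [exact: ltW | rewrite /mm; nra].
have hle : mm * (168/169) <= mm - w * w by lra.
apply: le_trans (ler_wpM2l (ltW e0) hle).
have -> : 12 / 13 * eps * M * M = 12/13 * (eps * mm) by rewrite /mm; ring.
have -> : eps * (mm * (168 / 169)) = 168/169 * (eps * mm) by ring.
lra.
Qed.

Lemma B5 P Q x c sg del w M : 0 <= x -> (sg = 1 \/ sg = -1) -> 0 < M ->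
  c - del * sg = - (w / M) * c * sg ->
  `|P - Q| + ((`|P + x * del - Q| - `|P - x * del - Q|) / 2) * sg - `|w| / M * (x * `|c|)
    <= `|P + x * c - Q|.
Proof.
move=> x0 hsg M0 hdev.
have h1 : `|P + x * del * sg - Q| - `|x * (c - del * sg)| <= `|P + x * c - Q|.
  have := ler_normB (P + x * c - Q) (x * (c - del * sg)).
  have -> : P + x * c - Q - x * (c - del * sg) = P + x * del * sg - Q by ring.
  lra.
have h2 : `|x * (c - del * sg)| = `|w| / M * (x * `|c|).
  rewrite hdev normrM (ger0_norm x0) !normrM normrN normrM normfV (gtr0_norm M0).
  by case: hsg => ->; rewrite ?normrN normr1; field; rewrite lt0r_neq0.
rewrite h2 in h1.
suff : `|P - Q| + ((`|P + x * del - Q| - `|P - x * del - Q|) / 2) * sg <= `|P + x * del * sg - Q| by lra.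
have tri : `|P - Q| <= (`|P + x * del - Q| + `|P - x * del - Q|) / 2.
  have -> : P - Q = ((P + x * del - Q) + (P - x * del - Q)) / 2 by field.
  rewrite normrM (ger0_norm (_ : (0:R) <= 2^-1)); last by rewrite invr_ge0.
  have := ler_normD (P + x * del - Q) (P - x * del - Q); lra.
case: hsg => -> ; rewrite ?mulr1 ?mulrN1; lra.
Qed.

End Arith2.
Arguments B1 {R}.
Arguments B4 {R}.
Arguments B5 {R}.
Arguments cc {R n}.
Arguments lin {R n}.
Arguments sum_c {R n}.
Arguments sum_abs {R n}.
Arguments c_ge {R n}.
Arguments dev {R n}.

Section Arith3.
Variable R : realType.
Implicit Types (a c d Sa Sb Dd tt wm D M w tau : R).
Lemma C1 a c d : 0 <= a -> -d <= c -> d <= 1 -> 0 <= a + a * c.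
Proof.
move=> a0 h1 h2; have h : 0 <= 1 + c by lra.
have := mulr_ge0 a0 h; rewrite mulrDr mulr1 //.
Qed.
Lemma C2 a c : 0 <= a -> 0 < a + a * c -> 0 < a.
Proof.
move=> a0; rewrite le_eqVlt in a0; case/orP: a0 => // /eqP <-.
by rewrite mul0r addr0 ltxx.
Qed.
Lemma C3 Sa Sb Dd tt wm D : Sa + Dd - wm <= Sb -> - tt < Dd -> tt = 20 * D / 13 ->
  wm < 6 * D / 13 -> 0 < D -> 2^-1 * Sa - D < 2^-1 * Sb.
Proof. move=> h1 h2 ht h3 h4; rewrite ht in h2; lra. Qed.
Lemma C4 w M tau D : `|w| < tau -> tau <= M / 13 -> 0 < M -> 0 < D ->
  `|w| / M * (6 * D) < 6 * D / 13.
Proof.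
move=> h1 h2 M0 D0.
have h : `|w| / M < 13^-1.
  rewrite ltr_pdivrMr //; lra.
have D6 : 0 < 6 * D by lra.
have := ltr_pM2r D6; move=> e; rewrite -e in h.
have -> : 6 * D / 13 = 13^-1 * (6 * D) by rewrite mulrC.
exact: h.
Qed.
End Arith3.
Arguments C1 {R}. Arguments C2 {R}. Arguments C3 {R}. Arguments C4 {R}.
Theorem lemma1 (R : realType) (eps Delta beta : R) (n : nat)
  (pt : 'I_n -> R) (H L : {set 'I_n})
  (v : 'I_(n ^ 2) -> 'I_n -> R) (k2 : nat) (p : 'I_k2 -> 'I_n -> R) :
  0 < eps -> eps <= Delta -> Delta <= 1 -> (2 <= n)%N ->
  is_distr pt ->
  beta <= 1 -> 1 - beta >= 8 * Delta ->
  [disjoint H & L] -> H :|: L = [set: 'I_n] ->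
  \sum_(i in L) pt i = 1 - beta ->
  \sum_(i in H) pt i = beta ->
  \sum_(i in L) pt i ^+ 2 <=
    (1 - beta) ^+ 2 / ((56 ^ 2)%:R * (Delta / eps) ^+ 2 * ln (n%:R)) ->
  (forall a j, -1 <= v a j <= 1) ->
  (forall b, is_distr (p b)) ->
  k2%:R <= powR (n%:R) (27%:R * (Delta / eps) ^+ 2) ->
  exists pt' : 'I_n -> R,
    [/\ is_distr pt', supp_sub pt' pt,
        vdist pt pt' = 3 * Delta,
        (forall a, dotp pt' (v a) <= dotp pt (v a) + eps) &
        (forall b, vdist pt' (p b) > vdist pt (p b) - Delta)].
Proof.
move=> eps0 epsD D1 n2 [pt0 pt1] b1 hMD _ _ hL _ hL2 hv hp hk2.
have D0 : 0 < Delta by apply: lt_le_trans epsD.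
set M := 1 - beta in hMD hL hL2.
have M0 : 0 < M by lra.
have q1 : 1 <= Delta / eps by rewrite ler_pdivlMr // mul1r.
set K := (Delta / eps) ^+ 2 in hL2 hk2.
have K1 : 1 <= K by rewrite /K expr2; nra.
have K0 : 0 < K by lra.
have hKe : K * eps ^+ 2 = Delta ^+ 2 by rewrite /K; field; exact: lt0r_neq0.
have n1 : (1 : R) < n%:R by rewrite ltr1n.
set l := ln n%:R in hL2 hk2.
have l0 : 0 < l by apply: ln_gt0.
have en : expR l = n%:R by rewrite /l lnK // posrE; lra.
have S56 : ((56 ^ 2)%:R : R) = 3136 by rewrite natrX.
rewrite S56 in hL2.
set S := 3136 * K * l in hL2.
have S0 : 0 < S by rewrite /S; apply: mulr_gt0 => //; apply: mulr_gt0.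
set x := fun i : 'I_n => if i \in L then pt i else 0.
have hx0 : forall i, 0 <= x i by move=> i; rewrite /x; case: ifP => // _; exact: pt0.
have hxM : \sum_(i < n) x i = M by rewrite -hL [in RHS]big_mkcond.
have hx2 : \sum_(i < n) x i ^+ 2 <= M ^+ 2 / S.
  apply: le_trans hL2; rewrite [in X in _ <= X]big_mkcond /=; apply: ler_sum => i _.
  by rewrite /x; case: ifP => //; rewrite expr0n.
have hxp : forall i, x i = 0 \/ x i = pt i by move=> i; rewrite /x; case: ifP; auto.
set tau := eps * M / (13 * Delta).
have tau0 : 0 < tau by rewrite /tau divr_gt0 ?mulr_gt0 //.
have tauM : tau <= M / 13 by apply: A1.
set t3 := 20 * Delta / 13.
set delta := 6 * Delta / M.
have del0 : 0 <= delta by rewrite /delta; apply: divr_ge0; [apply: mulr_ge0 => //; exact: ltW | exact: ltW].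
set db := fun (b : 'I_k2) i =>
  (`|pt i + x i * delta - p b i| - `|pt i - x i * delta - p b i|) / 2.
have hdb : forall b i, - (x i * delta) <= db b i <= x i * delta.
  by move=> b i; apply: A2; apply: mulr_ge0.
have hexp1 : - (15/64) * tau ^+ 2 / (M ^+ 2 / S) <= - 4 * l.
  have -> : - (15/64) * tau ^+ 2 / (M ^+ 2 / S) =
      - ((15/64) * (3136/169)) * l * (K * eps ^+ 2 / Delta ^+ 2).
    rewrite /tau /S; field; by rewrite ?lt0r_neq0.
  rewrite hKe divff ?mulr1; [exact: A3 | by rewrite expf_neq0 // lt0r_neq0].
have hexp4 : - (15/64) * t3 ^+ 2 / (36 * Delta ^+ 2 / S) <= - 29 * K * l.
  have -> : - (15/64) * t3 ^+ 2 / (36 * Delta ^+ 2 / S) =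
      - ((15/64) * (400/6084) * 3136) * K * l.
    rewrite /t3 /S; field; by rewrite ?lt0r_neq0.
  have KL : 0 < K * l by apply: mulr_gt0 => //; lra.
  have eKL : forall c : R, c * K * l = c * (K * l) by move=> c; rewrite mulrA.
  rewrite !eKL; exact: A4.
have ind0 : forall b : bool, 0 <= ind b :> R by move=> [] /=; rewrite /ind //.
pose E1 := fun s : {ffun 'I_n -> bool} => tau <= \sum_(i < n) x i * sgb (s i).
pose E2 := fun s : {ffun 'I_n -> bool} => tau <= \sum_(i < n) (- x i) * sgb (s i).
pose E3 := fun a (s : {ffun 'I_n -> bool}) => tau <= \sum_(i < n) (x i * v a i) * sgb (s i).
pose E4 := fun b (s : {ffun 'I_n -> bool}) => t3 <= \sum_(i < n) (- db b i) * sgb (s i).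
pose bad := fun s : {ffun 'I_n -> bool} => ind (E1 s) + ind (E2 s) + \sum_(a < n ^ 2) ind (E3 a s)
   + \sum_(b < k2) ind (E4 b s) : R.
pose e4 := expR (- 4 * l).
pose e29 := expR (- 29 * K * l).
set T := (2 : R) ^+ n.
have B0 : 0 < M ^+ 2 / S by apply: divr_gt0 => //; apply: exprn_gt0.
have T0 : 0 <= T by apply: exprn_ge0.
have h1 : \sum_s ind (E1 s) <= T * e4.
  apply: le_trans (hoeff _ _ _ B0 (ltW tau0) hx2) _.
  by apply: ler_wpM2l => //; rewrite ler_expR.
have h2 : \sum_s ind (E2 s) <= T * e4.
  have hx2' : \sum_(i < n) (- x i) ^+ 2 <= M ^+ 2 / S.
    by under eq_bigr do rewrite sqrrN.
  apply: le_trans (hoeff _ _ _ B0 (ltW tau0) hx2') _.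
  by apply: ler_wpM2l => //; rewrite ler_expR.
have h3 : forall a, \sum_s ind (E3 a s) <= T * e4.
  move=> a.
  have hx2' : \sum_(i < n) (x i * v a i) ^+ 2 <= M ^+ 2 / S.
    apply: le_trans hx2; apply: ler_sum => i _.
    have := hv a i; case/andP => va1 va2.
    rewrite exprMn -[X in _ <= X]mulr1; apply: ler_wpM2l; first exact: sqr_ge0.
    exact: A5.
  apply: le_trans (hoeff _ _ _ B0 (ltW tau0) hx2') _.
  by apply: ler_wpM2l => //; rewrite ler_expR.
have B4pos : 0 < 36 * Delta ^+ 2 / S by apply: divr_gt0 => //; rewrite mulr_gt0 // exprn_gt0.
have h4 : forall b, \sum_s ind (E4 b s) <= T * e29.
  move=> b.
  have hx2' : \sum_(i < n) (- db b i) ^+ 2 <= 36 * Delta ^+ 2 / S.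
    apply: le_trans (_ : \sum_(i < n) delta ^+ 2 * x i ^+ 2 <= _).
      apply: ler_sum => i _; rewrite sqrrN.
      exact: A6.
    rewrite -mulr_sumr.
    apply: le_trans (ler_wpM2l (exprn_ge0 2 del0) hx2) _.
    rewrite /delta le_eqVlt; apply/orP; left; apply/eqP; field.
    by rewrite ?lt0r_neq0.
  apply: le_trans (hoeff _ _ _ B4pos _ hx2') _; first exact: A7.
  by apply: ler_wpM2l => //; rewrite ler_expR.
have hsum : \sum_s bad s <= T * (2 * e4 + (n ^ 2)%:R * e4 + k2%:R * e29).
  rewrite /bad !big_split /=.
  rewrite [X in _ + X + _ <= _]exchange_big [X in _ + X <= _]exchange_big /=.
  have h3' : \sum_(a < n ^ 2) \sum_s ind (E3 a s) <= (n ^ 2)%:R * (T * e4).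
    apply: le_trans (ler_sum _ (fun a _ => h3 a)) _.
    by rewrite sumr_const card_ord mulr_natl.
  have h4' : \sum_(b < k2) \sum_s ind (E4 b s) <= k2%:R * (T * e29).
    apply: le_trans (ler_sum _ (fun b _ => h4 b)) _.
    by rewrite sumr_const card_ord mulr_natl.
  have := lerD (lerD (lerD h1 h2) h3') h4'.
  move=> /le_trans; apply.
  rewrite le_eqVlt; apply/orP; left; apply/eqP; ring.
set y := expR (- l).
have y0 : 0 < y by apply: expR_gt0.
have ey : y * n%:R = 1 by rewrite -en /y -expRD addNr expR0.
have y2 : y <= 2^-1.
  have : (2 : R) <= n%:R by rewrite ler_nat.
  by apply: A8.
have e4y : e4 = y ^+ 4 by rewrite /e4 /y -expRM_natl; congr expR; ring.
have nR : (n ^ 2)%:R = (n%:R : R) ^+ 2 by rewrite natrX.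
have n2e4 : (n ^ 2)%:R * e4 = y ^+ 2.
  rewrite nR e4y.
  have -> : y ^+ 4 = y ^+ 2 * y ^+ 2 by rewrite -exprD.
  rewrite mulrA -exprMn [n%:R * y]mulrC ey expr1n mul1r //.
have k2e : k2%:R * e29 <= y ^+ 2.
  have hpw : powR n%:R (27%:R * K) = expR (27 * K * l).
    rewrite /powR ifF; last by apply/negbTE; rewrite lt0r_neq0 // (lt_trans ltr01).
    by rewrite /l.
  rewrite hpw in hk2.
  apply: le_trans (ler_wpM2r (expR_ge0 _) hk2) _.
  rewrite /e29 -expRD /y -expRM_natl ler_expR.
  have hKl : l <= K * l by rewrite -[X in X <= _]mul1r; apply: ler_wpM2r => //; exact: ltW.
  exact: A10.
have hfin : 2 * e4 + (n ^ 2)%:R * e4 + k2%:R * e29 < 1.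
  rewrite n2e4 e4y; exact: A11.
have [s hs] : exists s, bad s < 1.
  case: (boolP [exists s, (bad s < 1)%R]) => [/existsP // | /existsPn hn].
  exfalso.
  have hT : \sum_(s : {ffun 'I_n -> bool}) (1 : R) = T.
    by rewrite sumr_const card_ffun card_bool card_ord /T natrX.
  have : T <= \sum_s bad s.
    rewrite -hT; apply: ler_sum => s _.
    by have := hn s; rewrite -leNgt.
  move=> hTb.
  have := le_trans hTb hsum.
  have hT0 : 0 < T by apply: exprn_gt0.
  move=> h; have h' : T * (2 * e4 + (n ^ 2)%:R * e4 + k2%:R * e29) < T * 1 by rewrite ltr_pM2l.
  rewrite mulr1 in h'.
  by have := le_lt_trans h h'; rewrite ltxx.
have s3 : (0:R) <= \sum_(a < n ^ 2) ind (E3 a s) by apply: sumr_ge0 => a _; exact: ind0.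
have s4 : (0:R) <= \sum_(b < k2) ind (E4 b s) by apply: sumr_ge0 => b _; exact: ind0.
have [c1 c2 c3 c4] := le4 _ _ _ _ (ind0 (E1 s)) (ind0 (E2 s)) s3 s4.
have g1 : ~~ E1 s by apply: indF; exact: le_lt_trans c1 hs.
have g2 : ~~ E2 s by apply: indF; exact: le_lt_trans c2 hs.
have g3 : forall a, ~~ E3 a s.
  by move=> a; apply: indF; apply: le_lt_trans (le_lt_trans c3 hs); apply: le_bigD1.
have g4 : forall b, ~~ E4 b s.
  by move=> b; apply: indF; apply: le_lt_trans (le_lt_trans c4 hs); apply: le_bigD1.
rewrite /E1 /E2 /E3 /E4 -!ltNge in g1 g2 g3 g4.
pose sg := fun i => (sgb (s i) : R).
have hsg : forall i, sg i = 1 \/ sg i = -1 by move=> i; rewrite /sg /sgb; case: (s i); auto.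
pose w := \sum_(i < n) x i * sg i.
have hw1 : w < tau := g1.
have hw2 : - w < tau.
  move: g2; rewrite /w -sumrN.
  by under eq_bigr do rewrite mulNr.
have hwn : `|w| < tau by rewrite ltr_norml hw1 andbT ltrNl.
have [hMw1 hMw2 h6] := B1 _ _ _ _ D0 hMD hwn tauM.
have hxw : \sum_(i < n) x i * sg i = w by [].
exists (fun i => pt i + x i * cc sg M w Delta i).
split.
- split.
    move=> i; case: (hxp i) => ->; first by rewrite mul0r addr0; exact: pt0.
    exact: (C1 _ _ _ (pt0 i) (c_ge sg M w Delta hsg hMw1 hMw2 D0 i) h6).
  by rewrite big_split /= pt1 (sum_c x sg M w Delta hMw1 hMw2 hxM hxw) addr0.
- move=> i; case: (hxp i) => ->; first by rewrite mul0r addr0.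
  exact: C2 (pt0 i).
- rewrite /vdist.
  under eq_bigr => i _ do rewrite opprD addrA subrr add0r normrN normrM (ger0_norm (hx0 i)).
  rewrite (sum_abs x sg M w Delta hsg hMw1 hMw2 hxM hxw D0).
  by field.
- move=> a; rewrite /dotp.
  under eq_bigr do rewrite mulrDl.
  rewrite big_split /= lerD2l (lin x sg M w Delta (v a)).
  have hU := g3 a; rewrite -ltNge in hU.
  have hsv : `|\sum_(i < n) x i * v a i| <= M.
    apply: le_trans (ler_norm_sum _ _ _) _; rewrite -hxM; apply: ler_sum => i _.
    rewrite normrM (ger0_norm (hx0 i)); apply: ler_piMr; first exact: hx0.
    by rewrite ler_norml; exact: hv.
  exact: (B4 Delta eps M w _ _ tau D0 eps0 epsD M0 erefl hwn hU hsv tauM).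
- move=> b; rewrite /vdist.
  have key : \sum_(i < n) `|pt i - p b i| + \sum_(i < n) db b i * sg i
      - `|w| / M * \sum_(i < n) x i * `|cc sg M w Delta i|
      <= \sum_(i < n) `|pt i + x i * cc sg M w Delta i - p b i|.
    rewrite mulr_sumr -big_split -sumrB /=; apply: ler_sum => i _.
    exact: (B5 (pt i) (p b i) (x i) (cc sg M w Delta i) (sg i) delta w M (hx0 i) (hsg i) M0
      (dev sg M w Delta hsg hMw1 hMw2 i M0)).
  rewrite (sum_abs x sg M w Delta hsg hMw1 hMw2 hxM hxw D0) in key.
  have hD := g4 b; rewrite -ltNge in hD.
  have hD' : - t3 < \sum_(i < n) db b i * sg i.
    by rewrite ltrNl -sumrN; under eq_bigr do rewrite -mulNr.
  exact: (C3 _ _ _ _ _ _ key hD' erefl (C4 w M tau Delta hwn tauM M0 D0) D0).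
Qed.
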